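(* Let $\vartheta$ be the random substitution on $\{a,b,c,d\}$ given by $\vartheta(a)=\{ab,ba\}$, $\vartheta(b)=\{cb,bc\}$, $\vartheta(c)=\{ad,da\}$, $\vartheta(d)=\{cd,dc\}$. Then its topological entropy is $s=\log 2$.
   Context: A random substitution on a finite alphabet $\mathcal A$ maps each letter to a finite non-empty set of non-empty words; it is extended to words by $\vartheta(u_1\cdots u_m)=\{w_1\cdots w_m: w_k\in\vartheta(u_k)\}$ and to sets of words by unions; powers $\vartheta^m$ are compositions. The language $\mathcal L$ is the set of all subwords (contiguous factors) of words in $\vartheta^m(a)$, $a\in\mathcal A$, $m\in\mathbb N$; $\mathcal L_\ell$ its words of length $\ell$; the topological entropy is $s=\lim_{\ell\to\infty}\frac1\ell\log\#\mathcal L_\ell$. *)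

(* Defs.v *)
From Stdlib Require Import Reals List.
Import ListNotations.
Open Scope R_scope.

Definition rand_subst (A : Type) := A -> list (list A).

Fixpoint subst_word {A : Type} (th : rand_subst A) (u : list A) : list (list A) :=
  match u with
  | [] => [[]]
  | x :: u' => flat_map (fun w => map (fun r => w ++ r) (subst_word th u')) (th x)
  end.

Definition subst_set {A : Type} (th : rand_subst A) (S : list (list A)) : list (list A) :=
  flat_map (subst_word th) S.

Definition subst_pow {A : Type} (th : rand_subst A) (m : nat) (a : A) : list (list A) :=
  Nat.iter m (subst_set th) [[a]].

Definition subword {A : Type} (w v : list A) : Prop :=
  exists p s, v = p ++ w ++ s.

Definition in_language {A : Type} (th : rand_subst A) (w : list A) : Prop :=
  exists (a : A) (m : nat) (v : list A), In v (subst_pow th m a) /\ subword w v.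

Definition lang_card {A : Type} (th : rand_subst A) (l n : nat) : Prop :=
  exists L : list (list A),
    NoDup L /\ (forall w, In w L <-> (in_language th w /\ length w = l)) /\ length L = n.

Definition has_top_entropy {A : Type} (th : rand_subst A) (s : R) : Prop :=
  exists N : nat -> nat,
    (forall l, lang_card th l (N l)) /\
    Un_cv (fun l => ln (INR (N l)) / INR l) s.

Inductive abcd : Type := a | b | c | d.

Definition theta : rand_subst abcd := fun x =>
  match x with
  | a => [[a; b]; [b; a]]
  | b => [[c; b]; [b; c]]
  | c => [[a; d]; [d; a]]
  | d => [[c; d]; [d; c]]
  end.

(* Main.v *)
Require Import Defs.
From Stdlib Require Import Reals List Lia Lra Classical ClassicalEpsilon ZArith.
Import ListNotations.

Lemma in_sw_cons {A} (th : rand_subst A) z u v :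
  In v (subst_word th (z::u)) <-> exists w r, In w (th z) /\ In r (subst_word th u) /\ v = w ++ r.
Proof.
  simpl. rewrite in_flat_map. split.
  - intros [w [Hw Hv]]. apply in_map_iff in Hv. destruct Hv as [r [<- Hr]]. eauto.
  - intros (w & r & Hw & Hr & ->). exists w. split; auto. apply in_map. auto.
Qed.

Lemma in_sw_app {A} (th : rand_subst A) x y v :
  In v (subst_word th (x ++ y)) <-> exists v1 v2, v = v1 ++ v2 /\ In v1 (subst_word th x) /\ In v2 (subst_word th y).
Proof.
  revert v. induction x as [|z x IH]; intros v; simpl app.
  - split.
    + intros H. exists [], v. simpl. auto.
    + intros (v1 & v2 & -> & H1 & H2). simpl in H1. destruct H1 as [<-|[]]. exact H2.
  - rewrite in_sw_cons. split.
    + intros (w & r & Hw & Hr & ->). apply IH in Hr. destruct Hr as (v1 & v2 & -> & H1 & H2).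
      exists (w ++ v1), v2. rewrite app_assoc. split; auto. split; auto.
      apply in_sw_cons. eauto.
    + intros (v1 & v2 & -> & H1 & H2). apply in_sw_cons in H1. destruct H1 as (w & r & Hw & Hr & ->).
      exists w, (r ++ v2). split; auto. split. apply IH. eauto. now rewrite app_assoc.
Qed.

Lemma in_pow_S {A} (th : rand_subst A) m x v :
  In v (subst_pow th (S m) x) <-> exists V, In V (subst_pow th m x) /\ In v (subst_word th V).
Proof. unfold subst_pow. simpl. unfold subst_set. rewrite in_flat_map. tauto. Qed.

Lemma theta_len x w : In w (theta x) -> length w = 2%nat.
Proof. destruct x; simpl; intros [<-|[<-|[]]]; reflexivity. Qed.

Lemma sw_len u v : In v (subst_word theta u) -> length v = (2 * length u)%nat.
Proof.
  revert v; induction u as [|z u IH]; intros v H.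
  - simpl in H. destruct H as [<-|[]]. reflexivity.
  - apply in_sw_cons in H. destruct H as (w & r & Hw & Hr & ->).
    rewrite length_app, (theta_len _ _ Hw), (IH _ Hr). simpl. lia.
Qed.

Lemma sw_ex u : exists v, In v (subst_word theta u).
Proof.
  induction u as [|z u [r Hr]].
  - exists []. simpl. auto.
  - destruct z; eexists; apply in_sw_cons; do 2 eexists; (split; [simpl; left; reflexivity| eauto]).
Qed.

Lemma subword_trans {A} (x y z : list A) : subword x y -> subword y z -> subword x z.
Proof.
  intros (p & s & ->) (p' & s' & ->). exists (p' ++ p), (s ++ s').
  now rewrite !app_assoc.
Qed.

Lemma subword_refl {A} (x : list A) : subword x x.
Proof. exists [], []. now rewrite app_nil_r. Qed.

Lemma lang_sub w w' : in_language theta w -> subword w' w -> in_language theta w'.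
Proof. intros (x & m & V & HV & Hs) H. exists x, m, V. split; auto. eapply subword_trans; eauto. Qed.

Lemma lang_step v u : in_language theta v -> In u (subst_word theta v) -> in_language theta u.
Proof.
  intros (x & m & V & HV & (p & s & ->)) Hu.
  destruct (sw_ex p) as [up Hp]. destruct (sw_ex s) as [us Hs].
  exists x, (S m), (up ++ u ++ us). split.
  - apply in_pow_S. exists (p ++ v ++ s). split; auto.
    apply in_sw_app. exists up, (u ++ us). split; auto. split; auto.
    apply in_sw_app. eauto.
  - exists up, us. reflexivity.
Qed.

Lemma lang_nil : in_language theta [].
Proof. exists a, 0%nat, [a]. split. simpl. auto. exists [], [a]. reflexivity. Qed.

Lemma lang_a : in_language theta [a].
Proof. exists a, 0%nat, [a]. split. simpl. auto. apply subword_refl. Qed.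

Lemma lang_parent w : in_language theta w -> (2 <= length w)%nat ->
  exists V u, in_language theta V /\ In u (subst_word theta V) /\ subword w u.
Proof.
  intros (x & m & V & HV & Hs) Hl. destruct m as [|m].
  - simpl in HV. destruct HV as [<-|[]]. destruct Hs as (p & s & Hs).
    apply (f_equal (@length _)) in Hs. rewrite !length_app in Hs. simpl in Hs. lia.
  - apply in_pow_S in HV. destruct HV as (V0 & H0 & H1).
    exists V0, V. split; auto. exists x, m, V0. split; auto. apply subword_refl.
Qed.

Lemma app_len_inj {A} (l1 l2 l3 l4 : list A) : l1 ++ l2 = l3 ++ l4 -> length l1 = length l3 -> l1 = l3 /\ l2 = l4.
Proof.
  revert l3; induction l1 as [|x l1 IH]; intros [|y l3] H Hl; simpl in *; try lia; auto.
  injection H as -> H. destruct (IH l3 H) as [-> ->]; auto.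
Qed.

Lemma min_parent n : forall V u w, (length V <= n)%nat -> in_language theta V ->
  In u (subst_word theta V) -> subword w u ->
  exists V' u' p s, in_language theta V' /\ In u' (subst_word theta V') /\
    u' = p ++ w ++ s /\ (length p <= 1)%nat /\ (length s <= 1)%nat.
Proof.
  induction n as [|n IH]; intros V u w HVn HV Hu (p & s & Hw).
  - assert (length u = 0%nat) by (rewrite (sw_len _ _ Hu); lia).
    subst u. rewrite !length_app in H. exists V, (p ++ w ++ s), p, s. repeat split; auto; lia.
  - destruct (Nat.le_gt_cases (length p) 1) as [Hp|Hp];
    [destruct (Nat.le_gt_cases (length s) 1) as [Hs|Hs]|].
    + exists V, u, p, s. auto.
    +
      destruct V as [|z0 V0] eqn:EV.
      { simpl in Hu. destruct Hu as [<-|[]]. apply (f_equal (@length _)) in Hw.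
        rewrite !length_app in Hw. simpl in Hw. lia. }
      rewrite <- EV in *.
      assert (HVne : V <> []) by (rewrite EV; discriminate).
      destruct (exists_last HVne) as (V1 & z & EV1). rewrite EV1 in Hu.
      apply in_sw_app in Hu. destruct Hu as (r & wz & -> & Hr & Hwz).
      assert (Hlz : length wz = 2%nat) by (rewrite (sw_len _ _ Hwz); reflexivity).
      rewrite <- (firstn_skipn (length s - 2) s) in Hw.
      rewrite (app_assoc w), (app_assoc p) in Hw.
      apply app_len_inj in Hw.
      2:{ apply (f_equal (@length _)) in Hw. rewrite !length_app, length_firstn, length_skipn in *. lia. }
      destruct Hw as [Hr' _].
      eapply (IH V1 r w); eauto.
      * rewrite EV1, length_app in HVn. simpl in HVn. lia.
      * eapply lang_sub. exact HV. rewrite EV1. exists [], [z]. reflexivity.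
      * exists p, (firstn (length s - 2) s). rewrite Hr'. now rewrite !app_assoc.
    + destruct V as [|z V1].
      { simpl in Hu. destruct Hu as [<-|[]]. apply (f_equal (@length _)) in Hw.
        rewrite !length_app in Hw. simpl in Hw. lia. }
      apply in_sw_cons in Hu. destruct Hu as (wz & r & Hwz & Hr & ->).
      assert (Hlz : length wz = 2%nat) by (eapply theta_len; eauto).
      rewrite <- (firstn_skipn 2 p) in Hw. rewrite <- app_assoc in Hw.
      apply app_len_inj in Hw.
      2:{ rewrite length_firstn. lia. }
      destruct Hw as [_ Hr'].
      eapply (IH V1 r w); eauto.
      * simpl in HVn. lia.
      * eapply lang_sub. exact HV. exists [z], []. now rewrite app_nil_r.
      * exists (skipn 2 p), s. exact Hr'.
Qed.

Definition LC l (L : list (list abcd)) := NoDup L /\ forall w, In w L <-> (in_language theta w /\ length w = l).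

Lemma LC_in l L w : LC l L -> in_language theta w -> length w = l -> In w L.
Proof. intros [_ H] H1 H2. apply H; auto. Qed.

Lemma F_bound l L L' : LC l L -> LC (S l) L' -> (length L' <= 4 * length L)%nat.
Proof.
  intros HL [HN' HL'].
  assert (Hi : incl L' (flat_map (fun p => map (fun x => p ++ [x]) [a;b;c;d]) L)).
  { intros w Hw. apply HL' in Hw. destruct Hw as [Hw Hl].
    assert (Hne : w <> []) by (intros ->; discriminate).
    destruct (exists_last Hne) as (p & z & ->).
    apply in_flat_map. exists p. split.
    - apply (LC_in l); auto. eapply lang_sub; eauto. exists [], [z]. reflexivity.
      rewrite length_app in Hl. simpl in Hl. lia.
    - apply in_map_iff. exists z. split; [reflexivity|destruct z; simpl; auto]. }
  apply NoDup_incl_length in Hi; auto.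
  rewrite (flat_map_constant_length (c:=4%nat)) in Hi. lia.
  intros; reflexivity.
Qed.

Lemma LC0 L : LC 0 L -> length L = 1%nat.
Proof.
  intros [HN HL].
  assert (Hi : incl L [[]]).
  { intros w Hw. apply HL in Hw. destruct w; [simpl; auto|destruct Hw; discriminate]. }
  apply NoDup_incl_length in Hi; auto. simpl in Hi.
  assert (In [] L) by (apply HL; split; [apply lang_nil|reflexivity]).
  destruct L; [destruct H|]. simpl in *. lia.
Qed.

Lemma LC1 L : LC 1 L -> (1 <= length L)%nat.
Proof.
  intros [HN HL]. assert (In [a] L) by (apply HL; split; [apply lang_a|reflexivity]).
  destruct L; [destruct H|]. simpl. lia.
Qed.

Lemma theta_rec x y w : In w (theta x) -> In w (theta y) -> x = y.
Proof.
  destruct x, y; simpl; intros [<-|[<-|[]]] H; try reflexivity;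
  repeat (destruct H as [H|H]; [discriminate H|]); destruct H.
Qed.

Lemma sw_rec v v' u : In u (subst_word theta v) -> In u (subst_word theta v') -> v = v'.
Proof.
  revert v' u; induction v as [|z v IH]; intros v' u H H'.
  - simpl in H. destruct H as [<-|[]]. destruct v' as [|z' v']; auto.
    apply in_sw_cons in H'. destruct H' as (w & r & Hw & _ & He).
    apply theta_len in Hw. destruct w; simpl in *; [lia|discriminate].
  - apply in_sw_cons in H. destruct H as (w & r & Hw & Hr & ->).
    destruct v' as [|z' v'].
    { simpl in H'. destruct H' as [H'|[]]. apply theta_len in Hw. destruct w; simpl in *; [lia|discriminate]. }
    apply in_sw_cons in H'. destruct H' as (w' & r' & Hw' & Hr' & He).
    apply app_len_inj in He. 2:{ rewrite (theta_len _ _ Hw), (theta_len _ _ Hw'). reflexivity. }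
    destruct He as [<- <-]. rewrite (theta_rec _ _ _ Hw Hw'). f_equal. eauto.
Qed.

Lemma sw_nodup v : NoDup (subst_word theta v).
Proof.
  induction v as [|z v IH].
  - simpl. constructor. auto. constructor.
  - assert (Hgen : forall ws, NoDup ws -> (forall w, In w ws -> length w = 2%nat) ->
      NoDup (flat_map (fun w => map (fun r => w ++ r) (subst_word theta v)) ws)).
    { induction ws as [|w ws IHw]; intros Hn Hl; simpl. constructor.
      inversion Hn; subst. apply NoDup_app.
      - apply NoDup_map_NoDup_ForallPairs; auto. intros x y _ _ E. apply app_inv_head in E. auto.
      - apply IHw; auto. intros; apply Hl; simpl; auto.
      - intros u Hu Hu'. apply in_map_iff in Hu. destruct Hu as (r & <- & _).
        apply in_flat_map in Hu'. destruct Hu' as (w' & Hw' & Hm). apply in_map_iff in Hm.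
        destruct Hm as (r' & E & _). apply app_len_inj in E.
        2:{ rewrite !Hl; simpl; auto. }
        destruct E as [-> _]. contradiction. }
    apply Hgen. destruct z; simpl; repeat constructor; simpl; intuition discriminate.
    intros; eapply theta_len; eauto.
Qed.

Lemma sw_count v : length (subst_word theta v) = (2 ^ length v)%nat.
Proof.
  induction v as [|z v IH]; [reflexivity|].
  simpl subst_word. rewrite (flat_map_constant_length (c := 2 ^ length v)%nat).
  - destruct z; simpl; lia.
  - intros. rewrite length_map. auto.
Qed.

Lemma E_bound k L L' : LC k L -> LC (2*k) L' -> (2 ^ k * length L <= length L')%nat.
Proof.
  intros [HN HL] [HN' HL'].
  set (D := flat_map (subst_word theta) L).
  assert (HD : length D = (length L * 2 ^ k)%nat).
  { apply flat_map_constant_length. intros v Hv. apply HL in Hv. rewrite sw_count. f_equal; tauto. }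
  assert (ND : NoDup D).
  { unfold D. clear HD HL HL' HN'. induction L as [|v L IHL]; simpl. constructor.
    inversion HN; subst. apply NoDup_app; auto. apply sw_nodup.
    intros u Hu Hu'. apply in_flat_map in Hu'. destruct Hu' as (v' & Hv' & Hu').
    rewrite (sw_rec _ _ _ Hu Hu') in H1. contradiction. }
  assert (Hi : incl D L').
  { intros u Hu. apply in_flat_map in Hu. destruct Hu as (v & Hv & Hu). apply HL in Hv.
    apply HL'. split. eapply lang_step; eauto. tauto. rewrite (sw_len _ _ Hu). lia. }
  pose proof (NoDup_incl_length ND Hi). lia.
Qed.

Lemma U_bound l L L1 L2 : (2 <= l)%nat -> LC l L -> LC (l / 2) L1 -> LC (S (l / 2)) L2 ->
  (length L <= 2 ^ (S (l/2)) * length L1 + 2 ^ (S (S (l/2))) * length L2)%nat.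
Proof.
  intros Hl [HN HL] [_ HL1] [_ HL2].
  set (f := fun v => flat_map (fun u => [firstn l u; firstn l (skipn 1 u)]) (subst_word theta v)).
  assert (Hi : incl L (flat_map f (L1 ++ L2))).
  { intros w Hw. apply HL in Hw. destruct Hw as [Hw Hwl].
    destruct (lang_parent w Hw) as (V & u & HV & Hu & Hs); [lia|].
    destruct (min_parent (length V) V u w (le_n _) HV Hu Hs) as (V' & u' & p & s & HV' & Hu' & E & Hp & Hs').
    pose proof (sw_len _ _ Hu') as Hlen. rewrite E, !length_app in Hlen.
    apply in_flat_map. exists V'. split.
    - apply in_or_app. destruct (Nat.eq_dec (length V') (l/2)) as [e|ne].
      + left. apply HL1. auto.
      + right. apply HL2. split; auto.
        assert (l = 2 * (l/2) + l mod 2)%nat by (apply Nat.div_mod; lia).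
        assert (l mod 2 < 2)%nat by (apply Nat.mod_upper_bound; lia). lia.
    - unfold f. apply in_flat_map. exists u'. split; auto. subst u'.
      destruct p as [|x [|y p]]; simpl in Hp; try lia.
      + left. simpl. rewrite firstn_app, <- Hwl, Nat.sub_diag, firstn_all. simpl. now rewrite app_nil_r.
      + right; left. simpl. rewrite firstn_app, <- Hwl, Nat.sub_diag, firstn_all. simpl. now rewrite app_nil_r. }
  apply NoDup_incl_length in Hi; auto.
  rewrite flat_map_app, length_app in Hi.
  assert (forall k LL, (forall w, In w LL <-> in_language theta w /\ length w = k) ->
    length (flat_map f LL) = (length LL * (2 * 2 ^ k))%nat).
  { intros k LL HLL. apply flat_map_constant_length. intros v Hv. apply HLL in Hv.
    unfold f. rewrite (flat_map_constant_length (c := 2%nat)).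
    - rewrite sw_count. destruct Hv as [_ ->]. lia.
    - reflexivity. }
  rewrite (H _ _ HL1), (H _ _ HL2) in Hi. set (h := (l/2)%nat) in *. rewrite !Nat.pow_succ_r in *; try lia.
Qed.

Lemma filter_ex (P : list abcd -> Prop) (S : list (list abcd)) :
  exists L, NoDup L /\ forall w, In w L <-> In w S /\ P w.
Proof.
  induction S as [|x S [L [HN HL]]].
  - exists []. split. constructor. simpl. tauto.
  - destruct (classic (P x /\ ~ In x L)) as [[Hp Hn]|Hc].
    + exists (x :: L). split. constructor; auto.
      intros w. simpl. rewrite HL. split; [intros [<-|H]; tauto|].
      intros [[<-|H] H']; auto.
    + exists L. split; auto. intros w. rewrite HL. simpl. split; [tauto|].
      intros [[<-|H] H']; auto. apply NNPP. intros Hn. apply Hc. split; auto. rewrite HL. tauto.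
Qed.

Fixpoint allw (l : nat) : list (list abcd) :=
  match l with
  | O => [[]]
  | S l => flat_map (fun x => map (cons x) (allw l)) [a;b;c;d]
  end.

Lemma allw_in l w : length w = l -> In w (allw l).
Proof.
  revert w; induction l as [|l IH]; intros w H.
  - destruct w; [simpl; auto|discriminate].
  - destruct w as [|x w]; [discriminate|]. change (In (x :: w) (flat_map (fun x => map (cons x) (allw l)) [a;b;c;d])). apply in_flat_map. exists x.
    split. destruct x; simpl; auto. apply in_map. apply IH. simpl in H; lia.
Qed.

Lemma LC_ex l : exists L, LC l L.
Proof.
  destruct (filter_ex (fun w => in_language theta w /\ length w = l) (allw l)) as [L [HN HL]].
  exists L. split; auto. intros w. rewrite HL. split; [tauto|]. intros H. split; auto.
  apply allw_in. tauto.
Qed.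

Lemma card_ex l : exists n, lang_card theta l n.
Proof. destruct (LC_ex l) as [L [HN HL]]. exists (length L), L. auto. Qed.

Definition Nc (l : nat) : nat := proj1_sig (constructive_indefinite_description _ (card_ex l)).

Lemma N_card l : lang_card theta l (Nc l).
Proof. unfold Nc. destruct (constructive_indefinite_description _ _). auto. Qed.

Lemma N_LC l : exists L, LC l L /\ length L = Nc l.
Proof. destruct (N_card l) as (L & H1 & H2 & H3). exists L. split; [split|]; auto. Qed.

Lemma N0 : Nc 0 = 1%nat.
Proof. destruct (N_LC 0) as (L & H & <-). apply LC0; auto. Qed.
Lemma N1 : (1 <= Nc 1)%nat.
Proof. destruct (N_LC 1) as (L & H & <-). apply LC1; auto. Qed.
Lemma NF l : (Nc (S l) <= 4 * Nc l)%nat.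
Proof. destruct (N_LC l) as (L & H & <-). destruct (N_LC (S l)) as (L' & H' & <-). eapply F_bound; eauto. Qed.
Lemma NE k : (2 ^ k * Nc k <= Nc (2 * k))%nat.
Proof. destruct (N_LC k) as (L & H & <-). destruct (N_LC (2*k)) as (L' & H' & <-). eapply E_bound; eauto. Qed.
Lemma NU l : (2 <= l)%nat -> (Nc l <= 2 ^ (S (l/2)) * Nc (l/2) + 2 ^ (S (S (l/2))) * Nc (S (l/2)))%nat.
Proof.
  intros Hl. destruct (N_LC l) as (L & H & <-). destruct (N_LC (l/2)) as (L1 & H1 & <-).
  destruct (N_LC (S (l/2))) as (L2 & H2 & <-). eapply U_bound; eauto.
Qed.

Lemma N_triv l : (Nc l <= 4 ^ l)%nat.
Proof. induction l. rewrite N0. simpl. lia. pose proof (NF l). rewrite Nat.pow_succ_r'. lia. Qed.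

Lemma N_pos l : (1 <= Nc l)%nat.
Proof.
  induction l as [l IH] using (well_founded_induction Wf_nat.lt_wf).
  destruct l as [|[|l]]. rewrite N0; lia. apply N1.
  destruct (Nat.Even_or_Odd (S (S l))) as [[k Hk]|[k Hk]].
  - rewrite Hk. pose proof (NE k). pose proof (IH k ltac:(lia)).
    assert (1 <= 2 ^ k)%nat by (apply Nat.le_succ_l, Nat.neq_0_lt_0, Nat.pow_nonzero; lia). nia.
  - pose proof (NF (S (S l))). pose proof (NE (S k)). pose proof (IH (S k) ltac:(lia)).
    assert (1 <= 2 ^ S k)%nat by (apply Nat.le_succ_l, Nat.neq_0_lt_0, Nat.pow_nonzero; lia).
    replace (2 * S k)%nat with (S (S (S l))) in * by lia. nia.
Qed.

Lemma N_lower l : (2 ^ l <= Nc l * (l + 1) ^ 3)%nat.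
Proof.
  induction l as [l IH] using (well_founded_induction Wf_nat.lt_wf).
  destruct l as [|l]. rewrite N0. simpl. lia.
  destruct (Nat.Even_or_Odd (S l)) as [[k Hk]|[k Hk]].
  - rewrite Hk in *. pose proof (NE k). pose proof (IH k ltac:(lia)).
    assert (Hc : ((k + 1) ^ 3 <= (2 * k + 1) ^ 3)%nat) by (apply Nat.pow_le_mono_l; lia).
    rewrite Nat.pow_mul_r. change (2 ^ 2)%nat with 4%nat.
    replace (4 ^ k)%nat with (2 ^ k * 2 ^ k)%nat by (rewrite <- Nat.pow_mul_l; reflexivity).
    set (P := (2 ^ k)%nat) in *. set (Q := ((k+1)^3)%nat) in *. set (R := ((2*k+1)^3)%nat) in *.
    apply Nat.le_trans with (P * (Nc k * Q))%nat. apply Nat.mul_le_mono_l; auto.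
    apply Nat.le_trans with (Nc (2 * k) * Q)%nat. rewrite Nat.mul_assoc. apply Nat.mul_le_mono_r; auto.
    apply Nat.mul_le_mono_l; auto.
  - destruct k as [|k]. { assert (l = 0%nat) by lia. subst l. simpl. pose proof N1. lia. }
    rewrite Hk. replace (2 * S k + 1 + 1)%nat with (2 * (k + 2))%nat by lia.
    pose proof (NF (2 * S k + 1)). replace (S (2 * S k + 1)) with (2 * (k + 2))%nat in H by lia.
    pose proof (NE (k + 2)). pose proof (IH (k + 2)%nat ltac:(lia)).
    assert (Hc : (2 * (k + 2 + 1) ^ 3 <= (2 * (k + 2)) ^ 3)%nat).
    { rewrite Nat.pow_mul_l. simpl. nia. }
    assert (E2 : (2 ^ (2 * S k + 1) * 2 = 2 ^ (k + 2) * 2 ^ (k + 2))%nat)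
      by (rewrite <- Nat.pow_add_r, Nat.mul_comm, <- Nat.pow_succ_r'; f_equal; lia).
    set (P := (2 ^ (k + 2))%nat) in *. set (Q := ((k + 2 + 1)^3)%nat) in *. set (R := ((2*(k+2))^3)%nat) in *.
    set (n := Nc (k + 2)) in *. set (M := Nc (2 * (k + 2))) in *. set (Nc' := Nc (2 * S k + 1)) in *.
    assert (P * P * 2 <= P * n * R)%nat.
    { apply Nat.le_trans with (P * (n * Q) * 2)%nat. apply Nat.mul_le_mono_r, Nat.mul_le_mono_l; auto.
      replace (P * (n * Q) * 2)%nat with (P * n * (2 * Q))%nat by ring.
      apply Nat.mul_le_mono_l. auto. }
    assert (P * n * R <= 4 * Nc' * R)%nat by (apply Nat.mul_le_mono_r; lia).
    lia.
Qed.

Lemma poly_ineq h : (6 <= h)%nat -> (10 * (h + 2) ^ 5 <= (2 * h + 1) ^ 5)%nat.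
Proof.
  intros H. apply Nat2Z.inj_le. rewrite Nat2Z.inj_mul, !Nat2Z.inj_pow, Nat2Z.inj_add, Nat2Z.inj_add, Nat2Z.inj_mul.
  assert (H1 : ((8 * (Z.of_nat h + 2)) ^ 5 <= (5 * (2 * Z.of_nat h + 1)) ^ 5)%Z)
    by (apply Z.pow_le_mono_l; lia).
  rewrite !Z.pow_mul_l in H1. simpl Z.of_nat.
  set (A := ((Z.of_nat h + 2) ^ 5)%Z) in *. set (B := ((2 * Z.of_nat h + 1) ^ 5)%Z) in *.
  replace (8 ^ 5)%Z with 32768%Z in H1 by reflexivity.
  replace (5 ^ 5)%Z with 3125%Z in H1 by reflexivity. lia.
Qed.

Lemma N_upper l : (Nc l <= 4096 * 2 ^ l * (l + 1) ^ 5)%nat.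
Proof.
  induction l as [l IH] using (well_founded_induction Wf_nat.lt_wf).
  destruct (Nat.le_gt_cases l 12) as [Hl|Hl].
  - pose proof (N_triv l).
    assert (4 ^ l = 2 ^ l * 2 ^ l)%nat by (rewrite <- Nat.pow_mul_l; reflexivity).
    assert (2 ^ l <= 2 ^ 12)%nat by (apply Nat.pow_le_mono_r; lia).
    assert (1 <= (l + 1) ^ 5)%nat by (apply Nat.le_succ_l, Nat.neq_0_lt_0, Nat.pow_nonzero; lia).
    change (2 ^ 12)%nat with 4096%nat in *. nia.
  - pose proof (NU l ltac:(lia)).
    set (h := (l / 2)%nat) in *.
    assert (Hh : (2 * h <= l /\ l <= 2 * h + 1)%nat).
    { assert (l = 2 * (l/2) + l mod 2)%nat by (apply Nat.div_mod; lia).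
      assert (l mod 2 < 2)%nat by (apply Nat.mod_upper_bound; lia). unfold h. lia. }
    pose proof (IH h ltac:(lia)). pose proof (IH (S h) ltac:(lia)).
    pose proof (poly_ineq h ltac:(lia)).
    assert ((2 * h + 1) ^ 5 <= (l + 1) ^ 5)%nat by (apply Nat.pow_le_mono_l; lia).
    assert (2 ^ h * 2 ^ h <= 2 ^ l)%nat by (rewrite <- Nat.pow_add_r; apply Nat.pow_le_mono_r; lia).
    assert ((h + 1) ^ 5 <= (h + 2) ^ 5)%nat by (apply Nat.pow_le_mono_l; lia).
    rewrite !(Nat.pow_succ_r' 2 (S h)), !(Nat.pow_succ_r' 2 h) in *. replace (S h + 1)%nat with (h + 2)%nat in * by lia.
    set (X := (2 ^ h)%nat) in *. set (Y := ((h + 2) ^ 5)%nat) in *. set (Z := ((h + 1) ^ 5)%nat) in *.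
    set (W := ((l + 1) ^ 5)%nat) in *. set (V := ((2 * h + 1) ^ 5)%nat) in *.
    assert (2 * X * Nc h <= 2 * X * (4096 * X * Y))%nat.
    { apply Nat.mul_le_mono_l. apply Nat.le_trans with (4096 * X * Z)%nat; auto. apply Nat.mul_le_mono_l; auto. }
    assert (2 * (2 * X) * Nc (S h) <= 2 * (2 * X) * (4096 * (2 * X) * Y))%nat.
    { apply Nat.mul_le_mono_l. auto. }
    assert (Nc l <= 4096 * (X * X) * (10 * Y))%nat by lia.
    assert (X * X * (10 * Y) <= 2 ^ l * W)%nat by (apply Nat.mul_le_mono; lia).
    nia.
Qed.
From Coquelicot Require Import Coquelicot.
Open Scope R_scope.

Lemma lim_INR1 : is_lim_seq (fun n => INR n + 1) p_infty.
Proof.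
  apply is_lim_seq_ext with (fun n => INR (S n)). intros; apply S_INR.
  apply (is_lim_seq_incr_1 INR). apply is_lim_seq_INR.
Qed.

Lemma lim_v : is_lim_seq (fun n => ln (INR n + 1) / (INR n + 1)) 0.
Proof.
  apply (is_lim_comp_seq (fun y => ln y / y) (fun n => INR n + 1) p_infty 0).
  apply is_lim_div_ln_p. exists 0%nat. intros; discriminate. apply lim_INR1.
Qed.

Lemma lim_w : is_lim_seq (fun n => / (INR n + 1)) 0.
Proof.
  apply (is_lim_seq_inv _ p_infty). apply lim_INR1. discriminate.
Qed.

Lemma est n : (1 <= n)%nat ->
  ln 2 - 6 * (ln (INR n + 1) / (INR n + 1)) <= ln (INR (Nc n)) / INR n <=
  ln 2 + (2 * ln 4096 * / (INR n + 1) + 10 * (ln (INR n + 1) / (INR n + 1))).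
Proof.
  intros Hn.
  assert (Hx : 1 <= INR n) by (apply (le_INR 1); auto).
  set (x := INR n) in *.
  assert (HL : 1 <= INR (Nc n)) by (apply (le_INR 1); apply N_pos).
  set (L := INR (Nc n)) in *.
  pose proof (N_lower n) as Hlo. pose proof (N_upper n) as Hup.
  apply le_INR in Hlo, Hup. rewrite mult_INR, !pow_INR, plus_INR in Hlo.
  rewrite !mult_INR, !pow_INR, plus_INR in Hup. fold x L in Hlo, Hup.
  assert (E2 : INR 2 = 2) by (simpl; lra). assert (E1 : INR 1 = 1) by reflexivity.
  assert (E4 : INR 4096 = 4096) by (rewrite INR_IZR_INZ; reflexivity).
  rewrite E2, E1 in Hlo. rewrite E2, E1, E4 in Hup.
  assert (Hl1 : 0 <= ln (x + 1)) by (rewrite <- ln_1; apply ln_le; lra).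
  assert (Hl2 : 0 < ln 2) by (rewrite <- ln_1; apply ln_increasing; lra).
  assert (Hl4 : 0 < ln 4096) by (rewrite <- ln_1; apply ln_increasing; lra).
  apply ln_le in Hlo; [|apply pow_lt; lra].
  apply ln_le in Hup; [|lra].
  rewrite ln_pow in Hlo by lra. rewrite ln_mult, ln_pow in Hlo by (try apply pow_lt; lra).
  rewrite !ln_mult, !ln_pow in Hup by (try apply pow_lt; try apply Rmult_lt_0_compat; try apply pow_lt; lra).
  assert (E3 : INR 3 = 3) by (simpl; lra). assert (E5 : INR 5 = 5) by (simpl; lra).
  rewrite E3 in Hlo. rewrite E5 in Hup. fold x in Hlo, Hup.
  set (l1 := ln (x + 1)) in *. set (lL := ln L) in *.
  assert (Hi : x * / x = 1) by (field; lra).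
  assert (Hi1 : (x + 1) * / (x + 1) = 1) by (field; lra).
  assert (0 < / x) by (apply Rinv_0_lt_compat; lra).
  assert (0 < / (x + 1)) by (apply Rinv_0_lt_compat; lra).
  unfold Rdiv. set (ix := / x) in *. set (iy := / (x + 1)) in *.
  assert (Hv : 0 <= l1 * iy) by nra.
  assert (Hxy : ix <= 2 * iy).
  { apply Rmult_le_reg_l with (x * (x + 1)). nra.
    replace (x * (x + 1) * ix) with ((x * ix) * (x + 1)) by ring.
    replace (x * (x + 1) * (2 * iy)) with (2 * x * ((x + 1) * iy)) by ring.
    rewrite Hi, Hi1. lra. }
  split.
  -
    assert (lL * ix >= ln 2 - 3 * l1 * ix).
    { assert (lL * ix >= (x * ln 2 - 3 * l1) * ix) by nra.
      replace ((x * ln 2 - 3 * l1) * ix) with ((x * ix) * ln 2 - 3 * l1 * ix) in H1 by ring.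
      rewrite Hi in H1. lra. }
    assert (l1 * ix <= 2 * (l1 * iy)) by nra. lra.
  - assert (lL * ix <= ln 2 + ln 4096 * ix + 5 * l1 * ix).
    { assert (lL * ix <= (ln 4096 + x * ln 2 + 5 * l1) * ix). { apply Rmult_le_compat_r. lra. lra. }
      replace ((ln 4096 + x * ln 2 + 5 * l1) * ix) with ((x * ix) * ln 2 + ln 4096 * ix + 5 * l1 * ix) in H1 by ring.
      rewrite Hi in H1. lra. }
    assert (l1 * ix <= 2 * (l1 * iy)) by nra.
    assert (ln 4096 * ix <= 2 * ln 4096 * iy) by nra. lra.
Qed.

Lemma scal0 (u : nat -> R) c : is_lim_seq u 0 -> is_lim_seq (fun n => c * u n) 0.
Proof.
  intros H. pose proof (is_lim_seq_scal_l u c 0 H) as H'. simpl in H'.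
  replace (c * 0) with 0 in H' by ring. exact H'.
Qed.

Theorem mainTheorem12 : has_top_entropy theta (ln 2).
Proof.
  exists Nc. split. apply N_card.
  apply is_lim_seq_Reals.
  apply is_lim_seq_le_le_loc with
    (u := fun n => ln 2 + (-6) * (ln (INR n + 1) / (INR n + 1)))
    (w := fun n => ln 2 + (2 * ln 4096 * / (INR n + 1) + 10 * (ln (INR n + 1) / (INR n + 1)))).
  - exists 1%nat. intros n Hn. pose proof (est n ltac:(lia)). lra.
  - assert (H : is_lim_seq (fun n => ln 2 + (-6) * (ln (INR n + 1) / (INR n + 1))) (ln 2 + 0)).
    { apply is_lim_seq_plus'. apply is_lim_seq_const. apply scal0. apply lim_v. }
    replace (ln 2 + 0) with (ln 2) in H by ring. exact H.
  - assert (H : is_lim_seq (fun n => ln 2 + (2 * ln 4096 * / (INR n + 1) + 10 * (ln (INR n + 1) / (INR n + 1)))) (ln 2 + (0 + 0))).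
    { apply is_lim_seq_plus'. apply is_lim_seq_const. apply is_lim_seq_plus'.
      apply (scal0 (fun n => / (INR n + 1))). apply lim_w.
      apply scal0. apply lim_v. }
    replace (ln 2 + (0 + 0)) with (ln 2) in H by ring. exact H.
Qed.
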